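(* Let $M_1$ and $M_2$ be matroids on a common ground set $E$ with the same rank $r$, and assume $r_{M_1}(X)+r_{M_2}(E\setminus X)>r$ for every $\emptyset\ne X\subsetneq E$. Let $B$ be a common basis of $M_1,M_2$ and $\psi\colon E\to\Gamma$ a labeling to an abelian group $\Gamma$. Then every directed cycle $C$ of $D_{M_1,M_2}(B)$ satisfies $\psi'(C)=0$ if and only if there exist labelings $\psi_1,\psi_2\colon E\to\Gamma$ with $\psi=\psi_1+\psi_2$ such that, for $i=1,2$, $\psi_i$ is constant on each connected component of $M_i$.
   Context: $r_M$ denotes the rank function. For a common basis $B$, the digraph $D_{M_1,M_2}(B)$ has vertex set $E$ and arcs: for each $x\in B$, $y\in E\setminus B$ with $B-x+y$ a basis of $M_1$, an arc $xy$ with label $\psi'(xy):=\psi(y)$; for each $x\in B$, $y\in E\setminus B$ with $B-x+y$ a basis of $M_2$, an arc $yx$ with label $\psi'(yx):=-\psi(x)$. The label of a directed cycle is the sum of the labels of its arcs. Connected components of a matroid are the classes of the relation ''equal or in a common circuit''. *)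

(* Defs.v *)
From HB Require Import structures.
From mathcomp Require Import all_boot all_order all_algebra.
Set Implicit Arguments. Unset Strict Implicit. Unset Printing Implicit Defensive.
Import GRing.Theory.

(* A matroid on the finite ground set E (the whole finType), given by its
   independent sets (standard independence axioms). *)
Record matroid (E : finType) := Matroid {
  indep : {set E} -> bool;
  indep0 : indep set0;
  indep_sub : forall X Y : {set E}, Y \subset X -> indep X -> indep Y;
  indep_exch : forall X Y : {set E}, indep X -> indep Y -> #|X| < #|Y| ->
      exists2 e, e \in Y :\: X & indep (e |: X)
}.

Section MatroidDefs.
Variable E : finType.
Implicit Types (M : matroid E) (X B C : {set E}).

Definition mrank M X : nat := \max_(Y : {set E} | indep M Y && (Y \subset X)) #|Y|.

Definition is_basis M B : bool := maxset (indep M) B.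

Definition is_circuit M C : bool := minset (fun D : {set E} => ~~ indep M D) C.

(* relation "equal or in a common circuit"; its classes are the connected
   components of M *)
Definition comp_rel M (x y : E) : Prop :=
  x = y \/ exists C, is_circuit M C /\ x \in C /\ y \in C.

Definition const_on_components (G : Type) M (f : E -> G) : Prop :=
  forall x y, comp_rel M x y -> f x = f y.

Definition exch_arc (M1 M2 : matroid E) B (u v : E) : bool :=
  [&& u \in B, v \notin B & is_basis M1 (v |: (B :\ u))]
  ||
  [&& v \in B, u \notin B & is_basis M2 (u |: (B :\ v))].

Definition arc_label (G : zmodType) B (psi : E -> G) (u v : E) : G :=
  if u \in B then psi v else (- psi v)%R.

Definition is_dicycle (M1 M2 : matroid E) B (s : seq E) : bool :=
  [&& s != [::], uniq s & cycle (exch_arc M1 M2 B) s].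

Definition cycle_label (G : zmodType) B (psi : E -> G) (s : seq E) : G :=
  (\sum_(p <- zip s (rot 1 s)) arc_label B psi p.1 p.2)%R.

End MatroidDefs.

(* Main.v *)
Require Import Defs.
From mathcomp Require Import all_boot all_order all_algebra.
From mathcomp Require Import zify.
Import GRing.Theory.
Set Implicit Arguments. Unset Strict Implicit. Unset Printing Implicit Defensive.

Lemma basis_indep (E : finType) (M : matroid E) B : is_basis M B -> indep M B.
Proof. by move/maxsetp. Qed.

Lemma basis_notin (E : finType) (M : matroid E) B y :
  is_basis M B -> y \notin B -> ~~ indep M (y |: B).
Proof.
move=> hB yB; apply/negP=> hi.
have := maxsetsup hB hi (subsetUr _ _) => /setP /(_ y).
by rewrite !inE eqxx /= (negbTE yB).
Qed.

Lemma indep_le_basis (E : finType) (M : matroid E) B Y :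
  is_basis M B -> indep M Y -> #|Y| <= #|B|.
Proof.
move=> hB hY; rewrite leqNgt; apply/negP=> lt.
have [e /setDP [_ eB] hi] := indep_exch (basis_indep hB) hY lt.
by move: (basis_notin hB eB); rewrite hi.
Qed.

Lemma basis_card (E : finType) (M : matroid E) B S :
  is_basis M B -> indep M S -> #|S| = #|B| -> is_basis M S.
Proof.
move=> hB hS cS; apply/maxsetP; split=> // T hT sST.
apply/eqP; rewrite eq_sym eqEcard sST /= cS.
exact: indep_le_basis hB hT.
Qed.

Lemma aug (E : finType) (M : matroid E) (I J : {set E}) :
  indep M I -> indep M J -> #|I| <= #|J| ->
  exists S, [/\ indep M S, I \subset S, S \subset I :|: J & #|S| = #|J|].
Proof.
move=> hI hJ.
move: {2}(#|J| - #|I|) (erefl (#|J| - #|I|)) => n.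
elim: n I hI => [|n IH] I hI hn hle.
  exists I; split=> //; first exact: subsetUl.
  by apply/eqP; rewrite eqn_leq hle /= -subn_eq0 hn.
have lt : #|I| < #|J| by rewrite -subn_gt0 hn.
have [e /setDP [eJ eI] hi] := indep_exch hI hJ lt.
have ce : #|e |: I| = #|I|.+1 by rewrite cardsU1 eI.
have [||S [h1 h2 h3 h4]] := IH (e |: I) hi.
- by rewrite ce subnS hn.
- by rewrite ce.
exists S; split=> //.
  by apply: subset_trans h2; exact: subsetUr.
apply: (subset_trans h3); apply/subsetP=> z; rewrite !inE.
by case/orP=> [/orP[/eqP->|->]|->] //; rewrite ?eJ ?orbT.
Qed.

Lemma fund (E : finType) (M : matroid E) B (K : {set E}) y :
  is_basis M B -> y \notin B -> indep M (y |: (B :&: K)) ->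
  exists2 x, x \in B :\: K & is_basis M (y |: (B :\ x)).
Proof.
move=> hB yB hI.
have [S [hS IS SIB cS]] := aug hI (basis_indep hB) (indep_le_basis hB hI).
have SyB : S \subset y |: B.
  apply: (subset_trans SIB); apply/subsetP=> z; rewrite !inE.
  by case/orP=> [/orP[->|/andP[->]]|->]; rewrite ?orbT.
have yS : y \in S by apply: (subsetP IS); rewrite !inE eqxx.
have cD : #|(y |: B) :\: S| == 1.
  rewrite cardsD (setIidPr SyB) cS cardsU1 yB.
  by rewrite add1n subSnn.
have [x Dx] := cards1P cD.
have xD : x \in (y |: B) :\: S by rewrite Dx set11.
move: (xD); rewrite !inE => /andP [xS /orP[/eqP xy|xB]].
  by move: xS; rewrite xy yS.
have xK : x \notin K.
  apply/negP=> xK; move: xS; rewrite (subsetP IS) // !inE xB xK orbT.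
  by [].
exists x; first by rewrite !inE xB xK.
have -> : y |: (B :\ x) = S.
  apply/eqP; rewrite eqEsubset; apply/andP; split; apply/subsetP=> z.
    rewrite !inE => hz; apply/negPn/negP=> zS.
    have : z \in (y |: B) :\: S.
      rewrite !inE zS /=; case/orP: hz=> [->//|/andP[_ ->]]; exact: orbT.
    rewrite Dx inE => /eqP zx.
    by move: hz; rewrite zx eqxx /= orbF => /eqP xy; move: xS; rewrite xy yS.
  move=> zS; have := subsetP SyB z zS; rewrite !inE.
  case/orP=> [->//|zB]; rewrite zB andbT orbC; apply/orP; left.
  by apply/eqP=> zx; move: xS; rewrite -zx zS.
apply: basis_card hB hS cS.
Qed.

Definition closedK (E : finType) (M : matroid E) (B K : {set E}) :=
  forall y, y \in K -> y \notin B -> ~~ indep M (y |: (B :&: K)).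

Lemma bound (E : finType) (M : matroid E) B K :
  is_basis M B -> closedK M B K ->
  forall Y, indep M Y -> Y \subset K -> #|Y| <= #|B :&: K|.
Proof.
move=> hB cK Y hY YK; rewrite leqNgt; apply/negP=> lt.
have hBK : indep M (B :&: K) by apply: indep_sub (basis_indep hB); exact: subsetIl.
have [e /setDP [eY eBK] hi] := indep_exch hBK hY lt.
have eK : e \in K := subsetP YK e eY.
have eB : e \notin B by apply/negP=> eB; move: eBK; rewrite inE eB eK.
by move: (cK e eK eB); rewrite hi.
Qed.

Lemma mrank_le (E : finType) (M : matroid E) B K :
  is_basis M B -> closedK M B K -> mrank M K <= #|B :&: K|.
Proof.
move=> hB cK; apply/bigmax_leqP => Y /andP [hY YK]. exact: (@bound _ _ _ _ hB cK Y hY YK).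
Qed.

Lemma rank_full (E : finType) (M : matroid E) B :
  is_basis M B -> mrank M [set: E] = #|B|.
Proof.
move=> hB; apply/eqP; rewrite eqn_leq; apply/andP; split.
  by apply/bigmax_leqP => Y /andP [hY _]; exact: indep_le_basis hB hY.
by apply: (@leq_bigmax_cond _ (fun Y : {set E} => indep M Y && (Y \subset [set: E])) (fun Y : {set E} => #|Y|) B); rewrite (basis_indep hB) subsetT.
Qed.

Lemma indep_union (E : finType) (M : matroid E) B K (I I' : {set E}) :
  is_basis M B -> closedK M B K -> closedK M B (~: K) ->
  indep M I -> indep M I' -> I \subset K -> I' \subset ~: K ->
  indep M (I :|: I').
Proof.
move=> hB cK cK' hI hI' IK IK'.
have [S [hS IS SIB cS]] := aug hI (basis_indep hB) (indep_le_basis hB hI).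
have le' : #|I'| <= #|S| by rewrite cS; exact: indep_le_basis hB hI'.
have [T [hT IT TIS cT]] := aug hI' hS le'.
have TKS : T :&: K \subset S :&: K.
  apply/subsetP=> z; rewrite !inE => /andP [zT zK]; rewrite zK andbT.
  have := subsetP TIS z zT; rewrite inE; case/orP=> // zI'.
  by have := subsetP IK' z zI'; rewrite inE zK.
have b1 : #|S :&: K| <= #|B :&: K|.
  apply: (bound hB cK); [apply: indep_sub hS; exact: subsetIl|exact: subsetIr].
have b2 : #|T :&: ~: K| <= #|B :&: ~: K|.
  apply: (bound hB cK'); [apply: indep_sub hT; exact: subsetIl|exact: subsetIr].
have e1 := cardsID K T; have e2 := cardsID K B.
rewrite setDE in e1; rewrite setDE in e2.
have eq : T :&: K = S :&: K.
  apply/eqP; rewrite eqEcard TKS /=; lia.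
apply: indep_sub hT; apply/subsetP=> z; rewrite inE; case/orP=> [zI|zI'].
  have : z \in S :&: K by rewrite inE (subsetP IS) // (subsetP IK).
  by rewrite -eq inE => /andP [].
exact: subsetP IT z zI'.
Qed.

Lemma circuit_side (E : finType) (M : matroid E) B K C :
  is_basis M B -> closedK M B K -> closedK M B (~: K) ->
  is_circuit M C -> forall x, x \in C -> x \in K -> C \subset K.
Proof.
move=> hB cK cK' hC x xC xK; apply/subsetP=> z zC; apply/negPn/negP=> zK.
have ind (D : {set E}) : D \subset C -> D != C -> indep M D.
  move=> DC DnC; apply/negPn/negP=> dep.
  by move: DnC; rewrite (minsetinf hC dep DC) eqxx.
have h1 : indep M (C :&: K).
  apply: ind; first exact: subsetIl.
  by apply/negP=> /eqP eq; move: zC zK; rewrite -eq inE => /andP [_ ->].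
have h2 : indep M (C :&: ~: K).
  apply: ind; first exact: subsetIl.
  by apply/negP=> /eqP eq; move: xC xK; rewrite -eq !inE => /andP [_ /negP h] /h.
have := indep_union hB cK cK' h1 h2 (subsetIr _ _) (subsetIr _ _).
rewrite -setIUr setUCr setIT.
by move: (minsetp hC) => /negP.
Qed.

Lemma arc_comp (E : finType) (M : matroid E) B a b :
  is_basis M B -> a \in B -> b \notin B -> is_basis M (b |: (B :\ a)) ->
  comp_rel M a b.
Proof.
move=> hB aB bB hb; right.
have [C hC CbB] := @minset_exists _ (fun D : {set E} => ~~ indep M D) _ (basis_notin hB bB).
exists C; split; first exact: hC.
have dep := minsetp hC.
split.
  apply/negPn/negP=> aC; move: dep; rewrite /= (indep_sub _ (basis_indep hb)) //.
  apply/subsetP=> z zC; have := subsetP CbB z zC; rewrite !inE.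
  case/orP=> [->//|->]; rewrite andbT orbC; apply/orP; left.
  by apply/eqP=> za; move: aC; rewrite -za zC.
apply/negPn/negP=> bC; move: dep; rewrite /= (indep_sub _ (basis_indep hB)) //.
apply/subsetP=> z zC; have := subsetP CbB z zC; rewrite !inE.
case/orP=> [/eqP zb|//]; by move: bC; rewrite -zb zC.
Qed.

Lemma const_comp (E : finType) (M : matroid E) B (G : eqType) (f : E -> G) :
  is_basis M B ->
  (forall a b, a \in B -> b \notin B -> is_basis M (b |: (B :\ a)) -> f a = f b) ->
  const_on_components M f.
Proof.
move=> hB hf x y [->//|[C [hC [xC yC]]]].
pose K := [set z | f z == f x].
have cK : closedK M B K.
  move=> y0 y0K y0B; apply/negP=> hi; have [a /setDP [aB aK] ha] := fund hB y0B hi.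
  move: aK y0K; rewrite !inE (hf a y0 aB y0B ha) => /negP; exact.
have cK' : closedK M B (~: K).
  move=> y0 y0K y0B; apply/negP=> hi; have [a /setDP [aB aK] ha] := fund hB y0B hi.
  move: aK y0K; rewrite !inE negbK (hf a y0 aB y0B ha) => ->; by [].
have := subsetP (circuit_side hB cK cK' hC xC _) y yC.
by rewrite !inE eqxx => /(_ isT) /eqP.
Qed.

Fixpoint plab (E : finType) (G : zmodType) (B : {set E}) (psi : E -> G) (x : E) (t : seq E) : G :=
  if t is y :: t' then (arc_label B psi x y + plab B psi y t')%R else 0%R.

Lemma plab_cat (E : finType) (G : zmodType) B (psi : E -> G) x s1 s2 :
  plab B psi x (s1 ++ s2) = (plab B psi x s1 + plab B psi (last x s1) s2)%R.
Proof.
elim: s1 x => [|y s IH] x /=; first by rewrite add0r.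
by rewrite IH addrA.
Qed.

Lemma sum_zip_plab (E : finType) (G : zmodType) B (psi : E -> G) a b s :
  (\sum_(p <- zip (a :: s) (rcons s b)) arc_label B psi p.1 p.2)%R =
  plab B psi a (rcons s b).
Proof.
elim: s a => [|y s IH] a /=; first by rewrite big_cons big_nil.
by rewrite big_cons IH.
Qed.

Lemma cycle_label_plab (E : finType) (G : zmodType) B (psi : E -> G) x s :
  cycle_label B psi (x :: s) = plab B psi x (rcons s x).
Proof. by rewrite /cycle_label rot1_cons sum_zip_plab. Qed.

Lemma plab_tele (E : finType) (G : zmodType) B (psi : E -> G) (e : rel E) (g : E -> G) :
  (forall u v, e u v -> arc_label B psi u v = (g v - g u)%R) ->
  forall x t, path e x t -> plab B psi x t = (g (last x t) - g x)%R.
Proof.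
move=> hg x t; elim: t x => [|y t IH] x /=; first by rewrite subrr.
case/andP=> exy pt; rewrite IH // hg //.
by rewrite addrC addrA subrK.
Qed.

Lemma not_uniq_split (T : eqType) (s : seq T) :
  ~~ uniq s -> exists s1 y s2 s3, s = s1 ++ y :: s2 ++ y :: s3.
Proof.
elim: s => [|a s IH] //=; rewrite negb_and negbK.
case/orP=> [as_| /IH [s1 [y [s2 [s3 ->]]]]].
  by case/splitPr: as_ => p1 p2; exists [::], a, p1, p2.
by exists (a :: s1), y, s2, s3.
Qed.

Lemma closed_walk0 (E : finType) (M1 M2 : matroid E) B (G : zmodType) (psi : E -> G) :
  (forall s : seq E, is_dicycle M1 M2 B s -> cycle_label B psi s = 0%R) ->
  forall n x t, size t <= n -> path (exch_arc M1 M2 B) x t -> last x t = x ->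
  plab B psi x t = 0%R.
Proof.
move=> hc; elim=> [|n IH] x t.
  by rewrite leqn0 => /nilP -> .
case: (lastP t) => [//|s z] hs pt lt.
move: lt; rewrite last_rcons => zx; subst z.
case: (boolP (uniq (rcons s x))) => [u|nu].
  rewrite -cycle_label_plab; apply: hc.
  by rewrite /is_dicycle /= -rcons_uniq u.
have [s1 [y [s2 [s3 def]]]] := not_uniq_split nu.
have def' : rcons s x = rcons s1 y ++ (rcons s2 y ++ s3) by rewrite def !cat_rcons.
have lt : last x (rcons s1 y ++ (rcons s2 y ++ s3)) = x by rewrite -def' last_rcons.
rewrite def' in pt hs *.
move: pt; rewrite !cat_path !last_rcons => /and3P [p1 p2 p3].
rewrite !plab_cat !last_rcons.
have h2 : plab B psi y (rcons s2 y) = 0%R.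
  apply: IH => //; last by rewrite last_rcons.
  move: hs; rewrite !size_cat !size_rcons; lia.
rewrite h2 add0r.
have := IH x (rcons s1 y ++ s3); rewrite plab_cat last_rcons; apply.
- move: hs; rewrite !size_cat !size_rcons; lia.
- by rewrite cat_path p1 last_rcons.
- by move: lt; rewrite !last_cat !last_rcons.
Qed.

Lemma strong_conn (E : finType) (M1 M2 : matroid E) (r : nat)
  (hr1 : mrank M1 [set: E] = r)
  (hX : forall X : {set E}, X != set0 -> X != [set: E] ->
          (r < mrank M1 X + mrank M2 (~: X))%N)
  (B : {set E}) (hB1 : is_basis M1 B) (hB2 : is_basis M2 B) :
  forall u v, connect (exch_arc M1 M2 B) u v.
Proof.
move=> u v; pose S := [set z | connect (exch_arc M1 M2 B) u z].
have uS : u \in S by rewrite inE connect0.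
case: (boolP (v \in S)) => [|vS]; first by rewrite inE.
have n0 : ~: S != set0.
  by apply/set0Pn; exists v; rewrite inE.
have nT : ~: S != [set: E].
  by apply/negP=> /eqP /setP /(_ u); rewrite in_setC in_setT uS.
have := hX _ n0 nT; rewrite setCK.
have c1 : closedK M1 B (~: S).
  move=> y yS yB; apply/negP=> hi; have [a /setDP [aB aS] ha] := fund hB1 yB hi.
  move: aS yS; rewrite !inE negbK => aS /negP; apply.
  apply: connect_trans aS _; apply: connect1.
  by rewrite /exch_arc aB yB ha.
have c2 : closedK M2 B S.
  move=> y yS yB; apply/negP=> hi; have [a /setDP [aB aS] ha] := fund hB2 yB hi.
  move: aS yS; rewrite !inE => /negP aS yS; apply: aS.
  apply: connect_trans yS _; apply: connect1.
  by rewrite /exch_arc aB yB ha orbT.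
have l1 := mrank_le hB1 c1; have l2 := mrank_le hB2 c2.
have e := cardsID S B; rewrite setDE in e.
rewrite -hr1 (rank_full hB1); lia.
Qed.

Theorem theorem3p13 (E : finType) (M1 M2 : matroid E) (r : nat)
  (hr1 : mrank M1 [set: E] = r) (hr2 : mrank M2 [set: E] = r)
  (hX : forall X : {set E}, X != set0 -> X != [set: E] ->
          (r < mrank M1 X + mrank M2 (~: X))%N)
  (B : {set E}) (hB1 : is_basis M1 B) (hB2 : is_basis M2 B)
  (G : zmodType) (psi : E -> G) :
  (forall s : seq E, is_dicycle M1 M2 B s -> cycle_label B psi s = 0%R) <->
  (exists psi1 psi2 : E -> G, (forall e, psi e = (psi1 e + psi2 e)%R) /\
     const_on_components M1 psi1 /\ const_on_components M2 psi2).
Proof.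
pose e := exch_arc M1 M2 B.
split=> [hc|[psi1 [psi2 [hs [c1 c2]]]]]; last first.
  case=> [//|x s] /and3P [_ _ cyc].
  pose g v := if v \in B then (- psi1 v)%R else psi2 v.
  rewrite cycle_label_plab (plab_tele (e := e) (g := g)) ?last_rcons ?subrr //.
  move=> u v; rewrite /e /exch_arc /g /arc_label.
  case/orP=> /and3P [h1 h2 h3].
    rewrite h1 (negbTE h2) hs (c1 _ _ (arc_comp hB1 h1 h2 h3)).
    by rewrite opprK addrC.
  rewrite h1 (negbTE h2) hs (c2 _ _ (arc_comp hB2 h1 h2 h3)).
  by rewrite opprD addrC.
case: (pickP (fun _ : E => true)) => [v0 _|none]; last first.
  exists psi, (fun _ => 0%R); split; first by move=> x; rewrite addr0.
  by split=> x; have := none x.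
have conn := strong_conn hr1 hX hB1 hB2.
have ex u : exists t, path e v0 t && (last v0 t == u).
  by have /connectP [t pt ->] := conn v0 u; exists t; rewrite pt eqxx.
pose p u := plab B psi v0 (xchoose (ex u)).
have pot u v : e u v -> p v = (p u + arc_label B psi u v)%R.
  move=> huv.
  have /andP [pu /eqP lu] := xchooseP (ex u).
  have /andP [pv /eqP lv] := xchooseP (ex v).
  have /connectP [q pq lq] := conn v v0.
  have w1 : path e v0 (xchoose (ex u) ++ v :: q) by rewrite cat_path lu /= huv /e pq pu.
  have w2 : path e v0 (xchoose (ex v) ++ q) by rewrite cat_path lv /e pq pv.
  have z1 := closed_walk0 hc (leqnn _) w1 (_ : _ = v0).
  have z2 := closed_walk0 hc (leqnn _) w2 (_ : _ = v0).
  rewrite !plab_cat lu lv /= in z1 z2.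
  apply: (@addIr _ (plab B psi v q)).
  rewrite -addrA z1 ?z2 //.
  - by rewrite last_cat lv.
  - by rewrite last_cat lu.
pose psi1 v := if v \in B then (- p v)%R else (psi v - p v)%R.
exists psi1, (fun v => psi v - psi1 v)%R; split.
  by move=> v; rewrite addrC subrK.
split.
  apply: (const_comp hB1) => a b aB bB hb.
  have := pot a b; rewrite /e /exch_arc aB bB hb /= => /(_ isT).
  rewrite /arc_label aB /psi1 aB (negbTE bB) => ->.
  by rewrite (addrC (p a)) opprD addrA subrr add0r.
apply: (@const_comp _ _ _ G _ hB2) => a b aB bB hb.
have := pot b a; rewrite /e /exch_arc aB bB hb orbT => /(_ isT).
rewrite /arc_label (negbTE bB) /psi1 aB (negbTE bB) => ->.
by rewrite opprK opprB [in LHS]addrC [in RHS]addrC !subrK.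
Qed.
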